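(* For every real $a>0$: (i) for every complex $s$ with $\Re(s)>2$, \[\sum_{k=1}^\infty \zeta(s,ka)=a^{-s}\sum_{n=0}^\infty \zeta\Big(s,\frac{n}{a}+1\Big);\] (ii) for every complex $s$ with $\Re(s)>1$, \[\sum_{k=1}^\infty (-1)^{k-1} \zeta(s,ka)=(2a)^{-s}\sum_{n=0}^\infty\Big\{\zeta\Big(s,\frac{n}{2a}+\frac{1}{2}\Big)-\zeta\Big(s,\frac{n}{2a}+1\Big)\Big\}.\]
   Context: $\zeta(s,\alpha)=\sum_{n=0}^\infty (n+\alpha)^{-s}$ denotes the Hurwitz zeta function ($\Re(s)>1$, $\alpha>0$). *)

(* Defs.v *)
From Stdlib Require Import Reals.
From Coquelicot Require Import Coquelicot.
Open Scope R_scope.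

(* Complex power x^z for a real base x > 0: x^z := exp(z ln x), written out
   as exp(Re z ln x) (cos(Im z ln x) + i sin(Im z ln x)). *)
Definition cpow_pos (x : R) (z : C) : C :=
  (exp (Re z * ln x) * cos (Im z * ln x),
   exp (Re z * ln x) * sin (Im z * ln x)).

Definition hurwitz_zeta (s : C) (alpha : R) : C :=
  (Series (fun n => Re (cpow_pos (INR n + alpha) (Copp s))),
   Series (fun n => Im (cpow_pos (INR n + alpha) (Copp s)))).

(* Main.v *)
Require Import Defs.
From Stdlib Require Import Reals Lra Lia.
From Coquelicot Require Import Coquelicot.
Open Scope R_scope.

Lemma sum_n_C (a : nat -> C) n :
  sum_n a n = (sum_n (fun k => fst (a k)) n, sum_n (fun k => snd (a k)) n).
Proof.
induction n. rewrite !sum_O. destruct (a 0%nat); reflexivity.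
rewrite !sum_Sn, IHn. reflexivity. Qed.

Lemma CS (a : nat -> C) (l : C) :
  is_series a l <-> (is_series (fun n => fst (a n)) (fst l) /\ is_series (fun n => snd (a n)) (snd l)).
Proof.
unfold is_series. split.
- intros H. pose proof (proj1 (@filterlim_locally _ _ eventually (@filter_filter _ _ eventually_filter) _ _) H) as H'.
  split; apply (@filterlim_locally _ _ eventually (@filter_filter _ _ eventually_filter));
  intros eps; generalize (H' eps); apply filter_imp;
  intros n Hn; rewrite sum_n_C in Hn; destruct Hn as [H1 H2]; assumption.
- intros [H1 H2]. 
  pose proof (proj1 (@filterlim_locally _ _ eventually (@filter_filter _ _ eventually_filter) _ _) H1) as H1'.
  pose proof (proj1 (@filterlim_locally _ _ eventually (@filter_filter _ _ eventually_filter) _ _) H2) as H2'.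
  apply (@filterlim_locally _ _ eventually (@filter_filter _ _ eventually_filter)). intros eps. generalize (filter_and _ _ (H1' eps) (H2' eps)). apply filter_imp.
  intros n [Ha Hb]. rewrite sum_n_C. split; assumption.
Qed.

Lemma ex_cmp (a b : nat -> R) : (forall n, Rabs (a n) <= b n) -> ex_series b -> ex_series a.
Proof. intros H Hb. apply (ex_series_le a b); [exact H | exact Hb]. Qed.

Lemma sum_n_mono (a : nat -> R) N m : (forall n, 0 <= a n) -> (N <= m)%nat -> sum_n a N <= sum_n a m.
Proof. intros H Hm. induction Hm. lra. rewrite sum_Sn. change (plus (sum_n a m) (a (S m))) with (sum_n a m + a (S m)). specialize (H (S m)). lra. Qed.

Lemma sum_le_series (a : nat -> R) l N : (forall n, 0 <= a n) -> is_series a l -> sum_n a N <= l.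
Proof. intros H Hl.
assert (Rbar_le (sum_n a N) l).
{ apply (is_lim_seq_le_loc (fun _ => sum_n a N) (sum_n a)). exists N. intros m Hm. apply sum_n_mono; auto.
  apply is_lim_seq_const. exact Hl. }
exact H0. Qed.

Lemma term_le_sum (a : nat -> R) N : (forall n, 0 <= a n) -> a N <= sum_n a N.
Proof. intros H. destruct N. rewrite sum_O. lra. rewrite sum_Sn.
change (plus (sum_n a N) (a (S N))) with (sum_n a N + a (S N)).
assert (0 <= sum_n a N). { apply Rle_trans with (sum_n a 0). rewrite sum_O; auto. apply sum_n_mono; auto; lia. }
lra. Qed.

Lemma bnd_series (a : nat -> R) B : (forall n, 0 <= a n) -> (forall N, sum_n a N <= B) ->
  ex_series a /\ Series a <= B.
Proof. intros H HB.
destruct (ex_finite_lim_seq_incr (sum_n a) B) as [l Hl].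
{ intros n. rewrite sum_Sn. change (plus (sum_n a n) (a (S n))) with (sum_n a n + a (S n)). specialize (H (S n)); lra. }
exact HB.
assert (Hs : is_series a l) by exact Hl.
split. exists l; exact Hs. rewrite (is_series_unique a l Hs).
assert (Rbar_le l B). { apply (is_lim_seq_le (sum_n a) (fun _ => B)). exact HB. exact Hl. apply is_lim_seq_const. }
exact H0. Qed.

Lemma series_sum_n (a : nat -> nat -> R) (c : nat -> R) J :
  (forall j, is_series (fun i => a i j) (c j)) -> is_series (fun i => sum_n (a i) J) (sum_n c J).
Proof. intros H. induction J.
- apply (is_series_ext (fun i => a i 0%nat)). intros; rewrite sum_O; auto. rewrite sum_O. apply H.
- apply (is_series_ext (fun i => plus (sum_n (a i) J) (a i (S J)))). intros; rewrite sum_Sn; auto.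
  rewrite sum_Sn. exact (is_series_plus _ _ _ _ IHJ (H (S J))).
Qed.

Lemma NF (a : nat -> nat -> R) (r : nat -> R) L :
  (forall i j, 0 <= a i j) -> (forall i, is_series (a i) (r i)) -> is_series r L ->
  (forall j, ex_series (fun i => a i j)) /\ is_series (fun j => Series (fun i => a i j)) L.
Proof. intros Hp Hr HL.
assert (Hr0 : forall i, 0 <= r i). { intros i. apply Rle_trans with (sum_n (a i) 0). rewrite sum_O; auto. apply sum_le_series; auto. }
assert (Hc : forall j, ex_series (fun i => a i j)).
{ intros j. apply (ex_cmp _ r). intros i. rewrite Rabs_pos_eq by auto.
  apply Rle_trans with (sum_n (a i) j). apply term_le_sum; auto. apply sum_le_series; auto.
  exists L; auto. }
split; auto.
set (c := fun j => Series (fun i => a i j)).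
assert (Hcc : forall j, is_series (fun i => a i j) (c j)). { intros j. apply Series_correct. auto. }
assert (Hc0 : forall j, 0 <= c j). { intros j. apply Rle_trans with (sum_n (fun i => a i j) 0). rewrite sum_O; auto. apply sum_le_series; auto. }
destruct (bnd_series c L) as [Hex Hle]; auto.
{ intros J. rewrite <- (is_series_unique _ _ (series_sum_n a c J Hcc)).
  rewrite <- (is_series_unique _ _ HL). apply Series_le. intros i. split.
  apply Rle_trans with (sum_n (a i) 0). rewrite sum_O; auto. apply sum_n_mono; auto; lia.
  apply sum_le_series; auto. exists L; auto. }
assert (HL' : L <= Series c).
{ assert (Rbar_le L (Series c)). apply (is_lim_seq_le (sum_n r) (fun _ => Series c)).
  intros I. pose proof (series_sum_n (fun j i => a i j) r I Hr) as HH. simpl in HH.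
  rewrite <- (is_series_unique _ _ HH). apply Series_le. intros j. split.
  apply Rle_trans with (sum_n (fun i => a i j) 0). rewrite sum_O; auto. apply sum_n_mono; auto; lia.
  apply sum_le_series; auto. exact Hex. exact HL. apply is_lim_seq_const. exact H. }
replace L with (Series c) by lra. apply Series_correct; auto.
Qed.

Lemma Series_bnd (u M : nat -> R) : (forall n, Rabs (u n) <= M n) -> ex_series M -> Rabs (Series u) <= Series M.
Proof. intros H HM. apply Rle_trans with (Series (fun n => Rabs (u n))).
apply Series_Rabs. apply (ex_cmp _ M). intros; rewrite Rabs_Rabsolu; auto. auto.
apply Series_le. intros; split; auto. apply Rabs_pos. auto. Qed.

Lemma SF (u M : nat -> nat -> R) :
  (forall i j, Rabs (u i j) <= M i j) -> (forall i, ex_series (M i)) ->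
  ex_series (fun i => Series (M i)) ->
  (forall i, ex_series (u i)) /\ (forall j, ex_series (fun i => u i j)) /\
  exists L, is_series (fun i => Series (u i)) L /\ is_series (fun j => Series (fun i => u i j)) L.
Proof. intros Hb HM HMM.
assert (HM0 : forall i j, 0 <= M i j). { intros; apply Rle_trans with (Rabs (u i j)); auto; apply Rabs_pos. }
assert (Hu : forall i, ex_series (u i)). { intros i; apply (ex_cmp _ (M i)); auto. }
assert (Hru : ex_series (fun i => Series (u i))). { apply (ex_cmp _ (fun i => Series (M i))); auto. intros; apply Series_bnd; auto. }
pose (a1 := fun i j => u i j + M i j).
assert (Hr1 : forall i, is_series (a1 i) (Series (u i) + Series (M i))).
{ intros i. rewrite <- Series_plus by auto. apply Series_correct. apply (ex_series_plus (u i) (M i)); auto. }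
assert (HL1 : is_series (fun i => Series (u i) + Series (M i)) (Series (fun i => Series (u i)) + Series (fun i => Series (M i)))).
{ rewrite <- Series_plus by auto. apply Series_correct. apply (ex_series_plus (fun i => Series (u i)) (fun i => Series (M i))); auto. }
destruct (NF a1 _ _ (fun i j => ltac:(unfold a1; specialize (Hb i j); apply Rabs_le_between in Hb; lra)) Hr1 HL1) as [Hc1 HS1].
destruct (NF M (fun i => Series (M i)) _ HM0 (fun i => Series_correct _ (HM i)) (Series_correct _ HMM)) as [HcM HSM].
assert (Hcu : forall j, ex_series (fun i => u i j)).
{ intros j. apply (ex_series_ext (fun i => plus (a1 i j) (opp (M i j)))).
  intros n; unfold a1, plus, opp; simpl; ring.
  apply (ex_series_minus (fun i => a1 i j) (fun i => M i j)); auto. }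
split; auto. split; auto.
exists (Series (fun i => Series (u i))). split. apply Series_correct; auto.
apply (is_series_ext (fun j => Series (fun i => a1 i j) - Series (fun i => M i j))).
{ intros j. rewrite <- Series_minus by auto. apply Series_ext. intros; unfold a1; ring. }
replace (Series (fun i => Series (u i))) with ((Series (fun i => Series (u i)) + Series (fun i => Series (M i))) - Series (fun i => Series (M i))) by ring.
exact (is_series_minus _ _ _ _ HS1 HSM).
Qed.

Definition w (t x : R) := exp (- t * ln x).

Lemma w_pos t x : 0 < w t x. Proof. apply exp_pos. Qed.

Lemma exp_le' x y : x <= y -> exp x <= exp y.
Proof. intros H. destruct (Rle_lt_or_eq_dec _ _ H). left; apply exp_increasing; auto. subst; lra. Qed.
Lemma ln_le' x y : 0 < x -> x <= y -> ln x <= ln y.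
Proof. intros H0 H. destruct (Rle_lt_or_eq_dec _ _ H). left; apply ln_increasing; auto. subst; lra. Qed.

Lemma w_anti t x y : 0 <= t -> 0 < x -> x <= y -> w t y <= w t x.
Proof. intros Ht Hx Hy. unfold w. apply exp_le'.
assert (ln x <= ln y) by (apply ln_le'; lra). nra. Qed.

Lemma w_mult t x y : 0 < x -> 0 < y -> w t (x * y) = w t x * w t y.
Proof. intros. unfold w. rewrite ln_mult by auto. rewrite <- exp_plus. f_equal. ring. Qed.

Lemma w_one t : w t 1 = 1. Proof. unfold w. rewrite ln_1, Rmult_0_r, exp_0. auto. Qed.

Lemma w_div t x : 0 < x -> w t x / x = w (t+1) x.
Proof. intros Hx. unfold w. replace (- (t+1) * ln x) with (- t * ln x + - ln x) by ring.
rewrite exp_plus, exp_Ropp, exp_ln by auto. field. lra. Qed.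

Lemma cont_of_der (f : R -> R) (df x : R) : is_derive f x df -> continuity_pt f x.
Proof. intros H. apply derivable_continuous_pt. exists df. apply is_derive_Reals; auto. Qed.

Lemma mvt_bound (f df : R -> R) x y K : x < y ->
  (forall c, x <= c <= y -> is_derive f c (df c)) ->
  (forall c, x <= c <= y -> Rabs (df c) <= K) ->
  Rabs (f y - f x) <= K * (y - x).
Proof. intros Hxy Hd Hb.
destruct (MVT_gen f x y df) as [c [Hc Heq]].
- intros z Hz. rewrite Rmin_left, Rmax_right in Hz by lra. apply Hd; lra.
- intros z Hz. rewrite Rmin_left, Rmax_right in Hz by lra. apply (cont_of_der _ (df z)). apply Hd; lra.
- rewrite Rmin_left, Rmax_right in Hc by lra. rewrite Heq, Rabs_mult, (Rabs_pos_eq (y - x)) by lra.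
  apply Rmult_le_compat_r. lra. apply Hb; auto.
Qed.

Lemma PS r : 1 < r -> ex_series (fun n => w r (INR n + 1)).
Proof. intros Hr.
set (g := fun n : nat => w (r - 1) (INR n + 1)).
assert (Hstep : forall n, w r (INR (S n) + 1) <= (g n - g (S n)) / (r - 1)).
{ intros n. unfold g. rewrite S_INR.
  assert (H0 : 0 <= INR n) by apply pos_INR.
  assert (Hd : forall c, INR n + 1 <= c <= INR n + 1 + 1 -> is_derive (fun x => w (r - 1) x) c (- (r - 1) * w r c)).
  { intros c Hc. unfold w. auto_derive. lra.
    replace (- r * ln c) with (- (r-1) * ln c + - ln c) by ring. rewrite exp_plus, exp_Ropp, exp_ln by lra. field. lra. }
  pose proof (mvt_bound (fun x => w (r-1) x) (fun c => - (r - 1) * w r c) (INR n + 1) (INR n + 1 + 1) 0 ltac:(lra) Hd) as _.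
  destruct (MVT_gen (fun x => w (r-1) x) (INR n + 1) (INR n + 1 + 1) (fun c => - (r - 1) * w r c)) as [c [Hc Heq]].
  - intros z Hz. rewrite Rmin_left, Rmax_right in Hz by lra. apply Hd; lra.
  - intros z Hz. rewrite Rmin_left, Rmax_right in Hz by lra. apply (cont_of_der _ (- (r - 1) * w r z)). apply Hd; lra.
  - rewrite Rmin_left, Rmax_right in Hc by lra.
    assert (w r (INR n + 1 + 1) <= w r c) by (apply w_anti; lra).
    apply (Rmult_le_reg_r (r - 1)). lra. unfold Rdiv. rewrite Rmult_assoc, Rinv_l, Rmult_1_r by lra.
    replace (w (r - 1) (INR n + 1) - w (r - 1) (INR n + 1 + 1)) with (- (w (r - 1) (INR n + 1 + 1) - w (r - 1) (INR n + 1))) by ring.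
    rewrite Heq. nra. }
assert (Hg : forall n, 0 <= g n) by (intros; apply Rlt_le, w_pos).
assert (Hsum : forall N, sum_n (fun n => w r (INR n + 1)) N <= 1 + (1 - g N) / (r - 1)).
{ induction N.
  - rewrite sum_O. unfold g. simpl. rewrite Rplus_0_l, !w_one. unfold Rdiv. lra.
  - rewrite sum_Sn. change (plus ?a ?b) with (a + b). specialize (Hstep N).
    apply Rle_trans with (1 + (1 - g N) / (r - 1) + (g N - g (S N)) / (r - 1)). lra.
    right. field. lra. }
apply (bnd_series _ (1 + 1 / (r - 1))).
intros; apply Rlt_le, w_pos.
intros N. apply Rle_trans with (1 + (1 - g N) / (r - 1)). auto.
apply Rplus_le_compat_l. unfold Rdiv. apply Rmult_le_compat_r. left; apply Rinv_0_lt_compat; lra. specialize (Hg N); lra.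
Qed.


Lemma Series_ge0 (a : nat -> R) : (forall n, 0 <= a n) -> ex_series a -> 0 <= Series a.
Proof. intros H He. apply Rle_trans with (sum_n a 0). rewrite sum_O; auto.
apply sum_le_series; auto. apply Series_correct; auto. Qed.

Lemma ex_scal (c : R) (a : nat -> R) : ex_series a -> ex_series (fun n => c * a n).
Proof. intros H. exact (ex_series_scal c a H). Qed.

Lemma w_key t a n k : 0 <= t -> 0 < a ->
  w t (INR n + INR (S k) * a) <= w t (Rmin a 1) * (w (t/2) (INR n + 1) * w (t/2) (INR k + 1)).
Proof. intros Ht Ha. rewrite S_INR.
assert (Hn : 0 <= INR n) by apply pos_INR. assert (Hk : 0 <= INR k) by apply pos_INR.
set (b := Rmin a 1). assert (Hb : 0 < b) by (unfold b; apply Rmin_glb_lt; lra).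
assert (Hba : b <= a) by apply Rmin_l. assert (Hb1 : b <= 1) by apply Rmin_r.
apply Rle_trans with (w t (b * (INR n + INR k + 1))).
{ apply w_anti; auto. nra. nra. }
rewrite w_mult by lra. apply Rmult_le_compat_l. apply Rlt_le, w_pos.
unfold w. rewrite <- exp_plus. apply exp_le'.
assert (H2 : ln ((INR n + 1) * (INR k + 1)) <= ln ((INR n + INR k + 1) * (INR n + INR k + 1))).
{ apply ln_le'. nra. nra. }
rewrite !ln_mult in H2 by lra. nra. Qed.

Lemma DS t a : 2 < t -> 0 < a ->
  (forall k, ex_series (fun n => w t (INR n + INR (S k) * a))) /\
  ex_series (fun k => Series (fun n => w t (INR n + INR (S k) * a))).
Proof. intros Ht Ha.
set (C := w t (Rmin a 1)). set (Z := Series (fun n => w (t/2) (INR n + 1))).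
assert (HZ : ex_series (fun n => w (t/2) (INR n + 1))) by (apply PS; lra).
assert (Hrow : forall k, ex_series (fun n => (C * w (t/2) (INR k + 1)) * w (t/2) (INR n + 1))).
{ intros k. apply ex_scal. auto. }
assert (Hk : forall k, ex_series (fun n => w t (INR n + INR (S k) * a))).
{ intros k. eapply ex_cmp; [|apply (Hrow k)]. intros n. rewrite Rabs_pos_eq by (apply Rlt_le, w_pos).
     eapply Rle_trans; [apply (w_key t a n k); lra | right; unfold C; ring]. }
split; auto.
apply (ex_cmp _ (fun k => (C * Z) * w (t/2) (INR k + 1))).
2:{ apply ex_scal. apply PS; lra. }
intros k. rewrite Rabs_pos_eq.
- apply Rle_trans with (Series (fun n => (C * w (t/2) (INR k + 1)) * w (t/2) (INR n + 1))).
  apply Series_le. intros n; split. apply Rlt_le, w_pos. eapply Rle_trans; [apply (w_key t a n k); lra | right; unfold C; ring].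
  auto. rewrite Series_scal_l. unfold Z. right; ring.
- apply Series_ge0. intros; apply Rlt_le, w_pos. auto.
Qed.


Lemma C_ext (x y : C) : fst x = fst y -> snd x = snd y -> x = y.
Proof. destruct x, y; simpl; intros; subst; auto. Qed.

Definition SC (v : nat -> C) : C := (Series (fun n => fst (v n)), Series (fun n => snd (v n))).

Lemma SC_unique v l : is_series v l -> SC v = l.
Proof. intros H. apply CS in H. destruct H as [H1 H2]. unfold SC.
rewrite (is_series_unique _ _ H1), (is_series_unique _ _ H2). destruct l; auto. Qed.

Lemma SC_correct v : ex_series (fun n => fst (v n)) -> ex_series (fun n => snd (v n)) -> is_series v (SC v).
Proof. intros H1 H2. apply CS. split; apply Series_correct; auto. Qed.

Lemma cpow_mult a x z : 0 < a -> 0 < x -> Cmult (cpow_pos a z) (cpow_pos x z) = cpow_pos (a * x) z.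
Proof. intros Ha Hx. unfold cpow_pos. rewrite ln_mult by auto.
apply C_ext; simpl; rewrite !Rmult_plus_distr_l, exp_plus.
rewrite cos_plus; ring. rewrite sin_plus; ring. Qed.

Lemma cpow_inv a s : Cmult (cpow_pos a s) (cpow_pos a (Copp s)) = RtoC 1.
Proof. unfold cpow_pos. apply C_ext; simpl; unfold Re, Im.
- transitivity (exp (fst s * ln a) * exp (- fst s * ln a) * (cos (snd s * ln a) * cos (- snd s * ln a) - sin (snd s * ln a) * sin (- snd s * ln a))). ring.
  rewrite <- exp_plus, <- cos_plus. replace (fst s * ln a + - fst s * ln a) with 0 by ring.
  replace (snd s * ln a + - snd s * ln a) with 0 by ring. rewrite exp_0, cos_0. ring.
- transitivity (exp (fst s * ln a) * exp (- fst s * ln a) * (cos (snd s * ln a) * sin (- snd s * ln a) + sin (snd s * ln a) * cos (- snd s * ln a))). ring.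
  replace (cos (snd s * ln a) * sin (- snd s * ln a) + sin (snd s * ln a) * cos (- snd s * ln a)) with (sin (snd s * ln a + - snd s * ln a)) by (rewrite sin_plus; ring).
  replace (snd s * ln a + - snd s * ln a) with 0 by ring. rewrite sin_0. ring.
Qed.

Lemma cpow_ext x y z : x = y -> cpow_pos x z = cpow_pos y z.
Proof. intros; subst; auto. Qed.

Lemma fst_cpow_bnd x s : Rabs (fst (cpow_pos x (Copp s))) <= w (Re s) x.
Proof. unfold cpow_pos, w, Re; simpl. rewrite Rabs_mult, Rabs_pos_eq by (apply Rlt_le, exp_pos).
replace (- fst s * ln x) with (- fst s * ln x) by ring.
pose proof (COS_bound (- snd s * ln x)). apply Rabs_le in H. pose proof (exp_pos (- fst s * ln x)).
replace (exp (- fst s * ln x)) with (exp (- fst s * ln x) * 1) at 2 by ring.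
apply Rmult_le_compat_l; lra. Qed.

Lemma snd_cpow_bnd x s : Rabs (snd (cpow_pos x (Copp s))) <= w (Re s) x.
Proof. unfold cpow_pos, w, Re; simpl. rewrite Rabs_mult, Rabs_pos_eq by (apply Rlt_le, exp_pos).
pose proof (SIN_bound (- snd s * ln x)). apply Rabs_le in H. pose proof (exp_pos (- fst s * ln x)).
replace (exp (- fst s * ln x)) with (exp (- fst s * ln x) * 1) at 2 by ring.
apply Rmult_le_compat_l; lra. Qed.

Lemma ex_w_shift t al : 1 < t -> 0 < al -> ex_series (fun n => w t (INR n + al)).
Proof. intros Ht Ha. set (b := Rmin al 1). assert (Hb : 0 < b) by (unfold b; apply Rmin_glb_lt; lra).
assert (Hba : b <= al) by apply Rmin_l. assert (Hb1 : b <= 1) by apply Rmin_r.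
apply (ex_cmp _ (fun n => w t b * w t (INR n + 1))).
2:{ apply ex_scal. apply PS; auto. }
intros n. assert (0 <= INR n) by apply pos_INR. rewrite Rabs_pos_eq by (apply Rlt_le, w_pos).
rewrite <- w_mult by lra. apply w_anti; nra. Qed.

Lemma hz_correct s al : 1 < Re s -> 0 < al ->
  is_series (fun n => cpow_pos (INR n + al) (Copp s)) (hurwitz_zeta s al).
Proof. intros Hs Ha.
assert (He := ex_w_shift _ _ Hs Ha).
apply SC_correct.
- apply (ex_cmp _ _ (fun n => fst_cpow_bnd _ s) He).
- apply (ex_cmp _ _ (fun n => snd_cpow_bnd _ s) He).
Qed.

Lemma CF (u : nat -> nat -> C) (M : nat -> nat -> R) :
  (forall i j, Rabs (fst (u i j)) <= M i j /\ Rabs (snd (u i j)) <= M i j) ->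
  (forall i, ex_series (M i)) -> ex_series (fun i => Series (M i)) ->
  (forall i, is_series (u i) (SC (u i))) /\ (forall j, is_series (fun i => u i j) (SC (fun i => u i j))) /\
  exists L, is_series (fun i => SC (u i)) L /\ is_series (fun j => SC (fun i => u i j)) L.
Proof. intros Hb HM HMM.
destruct (SF (fun i j => fst (u i j)) M (fun i j => proj1 (Hb i j)) HM HMM) as [R1 [C1 [L1 [HL1 HL1']]]].
destruct (SF (fun i j => snd (u i j)) M (fun i j => proj2 (Hb i j)) HM HMM) as [R2 [C2 [L2 [HL2 HL2']]]].
split. intros i; apply SC_correct; auto.
split. intros j; apply SC_correct; auto.
exists (L1, L2). split; apply CS; simpl; split; auto.
Qed.

Lemma INR_pos_S k a : 0 < a -> 0 < INR (S k) * a.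
Proof. intros; apply Rmult_lt_0_compat; auto. apply lt_0_INR; lia. Qed.

Lemma part1 (a : R) (ha : 0 < a) (s : C) : 2 < Re s ->
     exists M : C,
       is_series (fun n : nat => hurwitz_zeta s (INR n / a + 1)) M /\
       is_series (fun k : nat => hurwitz_zeta s (INR (S k) * a))
                 (Cmult (cpow_pos a (Copp s)) M).
Proof. intros Hs.
set (u := fun k n : nat => cpow_pos (INR n + INR (S k) * a) (Copp s)).
set (M := fun k n : nat => w (Re s) (INR n + INR (S k) * a)).
destruct (DS (Re s) a Hs ha) as [HM HMM].
assert (Hb : forall i j, Rabs (fst (u i j)) <= M i j /\ Rabs (snd (u i j)) <= M i j).
{ intros; split; [apply fst_cpow_bnd | apply snd_cpow_bnd]. }
destruct (CF u M Hb HM HMM) as [Hrow [Hcol [L [HL1 HL2]]]].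
set (A := cpow_pos a (Copp s)). set (B := cpow_pos a s).
assert (Hcolv : forall n, SC (fun k => u k n) = Cmult A (hurwitz_zeta s (INR n / a + 1))).
{ intros n. apply SC_unique.
  assert (Hpos : 0 < INR n / a + 1). { assert (0 <= INR n) by apply pos_INR. assert (0 <= INR n / a) by (apply Rdiv_le_0_compat; lra). lra. }
  pose proof (is_series_scal A _ _ (hz_correct s _ ltac:(lra) Hpos)) as H.
  refine (is_series_ext _ _ _ _ H). intros k. simpl. unfold u, A.
  change (scal (cpow_pos a (- s)) (cpow_pos (INR k + (INR n / a + 1)) (- s))) with (Cmult (cpow_pos a (- s)) (cpow_pos (INR k + (INR n / a + 1)) (- s))).
  assert (0 <= INR k) by apply pos_INR.
  rewrite cpow_mult by lra. apply cpow_ext. rewrite S_INR. field. lra. }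
exists (Cmult B L). split.
- assert (HH := is_series_scal B _ _ HL2). refine (is_series_ext _ _ _ _ HH).
  intros n. simpl. rewrite Hcolv. change (scal B ?x) with (Cmult B x).
  rewrite Cmult_assoc. unfold B, A. rewrite cpow_inv. apply Cmult_1_l.
- replace (Cmult A (Cmult B L)) with L. exact HL1.
  rewrite Cmult_assoc, (Cmult_comm A B). unfold A, B. rewrite cpow_inv. symmetry; apply Cmult_1_l.
Qed.

Lemma trig_bnd A B c d : Rabs c <= 1 -> Rabs d <= 1 -> Rabs (A * c - B * d) <= Rabs A + Rabs B.
Proof. intros Hc Hd.
eapply Rle_trans. unfold Rminus. apply Rabs_triang. rewrite Rabs_Ropp, !Rabs_mult.
apply Rplus_le_compat; rewrite <- (Rmult_1_r (Rabs _)) at 2; apply Rmult_le_compat_l; auto; apply Rabs_pos.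
Qed.

Lemma diff_bnd (s : C) x h : 0 <= Re s + 1 -> 0 < x -> 0 < h ->
  Rabs (fst (cpow_pos (x + h) (Copp s)) - fst (cpow_pos x (Copp s))) <= ((Rabs (Re s) + Rabs (Im s)) * w (Re s + 1) x) * h /\
  Rabs (snd (cpow_pos (x + h) (Copp s)) - snd (cpow_pos x (Copp s))) <= ((Rabs (Re s) + Rabs (Im s)) * w (Re s + 1) x) * h.
Proof. intros Hs Hx Hh. unfold cpow_pos, Re, Im in *; simpl.
set (A := - fst s). set (B := - snd s).
assert (HAB : Rabs (fst s) + Rabs (snd s) = Rabs A + Rabs B) by (unfold A, B; rewrite !Rabs_Ropp; auto).
rewrite HAB.
assert (Hw : forall c, x <= c -> exp (A * ln c) / c <= w (fst s + 1) x).
{ intros c Hc. replace (exp (A * ln c)) with (w (fst s) c) by (unfold w, A; auto).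
  rewrite w_div by lra. apply w_anti; lra. }
assert (Hw0 : forall c, x <= c -> 0 <= exp (A * ln c) / c).
{ intros c Hc. apply Rlt_le, Rdiv_lt_0_compat. apply exp_pos. lra. }
split.
- eapply Rle_trans; [|right; instantiate (1 := ((Rabs A + Rabs B) * w (fst s + 1) x) * (x + h - x)); ring].
  apply (mvt_bound (fun y => exp (A * ln y) * cos (B * ln y)) (fun y => exp (A * ln y) / y * (A * cos (B * ln y) - B * sin (B * ln y)))).
  lra. intros c Hc. auto_derive. lra. field. lra.
  intros c Hc. rewrite Rabs_mult, Rabs_pos_eq by (apply Hw0; lra).
  rewrite Rmult_comm. apply Rmult_le_compat. apply Rabs_pos. apply Hw0; lra.
  apply trig_bnd; apply Rabs_le; [apply COS_bound | apply SIN_bound]. apply Hw; lra.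
- eapply Rle_trans; [|right; instantiate (1 := ((Rabs A + Rabs B) * w (fst s + 1) x) * (x + h - x)); ring].
  apply (mvt_bound (fun y => exp (A * ln y) * sin (B * ln y)) (fun y => exp (A * ln y) / y * (A * sin (B * ln y) - (- B) * cos (B * ln y)))).
  lra. intros c Hc. auto_derive. lra. field. lra.
  intros c Hc. rewrite Rabs_mult, Rabs_pos_eq by (apply Hw0; lra).
  rewrite Rmult_comm. apply Rmult_le_compat. apply Rabs_pos. apply Hw0; lra.
  rewrite <- (Rabs_Ropp B). apply trig_bnd; apply Rabs_le; [apply SIN_bound | apply COS_bound]. apply Hw; lra.
Qed.

Lemma sum_pair (g : nat -> R) j : sum_n g (S (2 * j)) = sum_n (fun j => g (2 * j)%nat + g (S (2 * j))) j.
Proof. induction j.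
- simpl. rewrite sum_Sn, !sum_O. reflexivity.
- replace (S (2 * S j)) with (S (S (S (2 * j)))) by lia. rewrite (sum_Sn g (S (S (2*j)))), (sum_Sn g (S (2*j))), IHj, sum_Sn.
  change (plus (plus ?a ?b) ?c) with (a + b + c). change (plus ?a ?b) with (a + b).
  replace (g (2 * S j)%nat) with (g (S (S (2*j)))) by (f_equal; lia).
  replace (g (S (2 * S j))) with (g (S (S (S (2*j))))) by (f_equal; lia). apply Rplus_assoc.
Qed.

Lemma pair_R (g : nat -> R) L : is_lim_seq g 0 ->
  is_series (fun j => g (2 * j)%nat + g (S (2 * j))) L -> is_series g L.
Proof. intros Hg HL.
apply is_lim_seq_spec in Hg. change (is_lim_seq (sum_n (fun j => g (2*j)%nat + g (S (2*j)))) L) in HL.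
apply is_lim_seq_spec in HL. change (is_lim_seq (sum_n g) L). apply is_lim_seq_spec.
intros eps. destruct (Hg (pos_div_2 eps)) as [N1 H1]. destruct (HL (pos_div_2 eps)) as [N2 H2].
exists (S (2 * (N1 + N2))). intros n Hn.
destruct (Nat.Even_or_Odd n) as [[j Hj] | [j Hj]].
- subst n. destruct j. lia.
  assert (E : sum_n g (2 * S j) = sum_n g (S (2 * S j)) - g (S (2 * S j))).
  { rewrite sum_Sn. change (plus ?a ?b) with (a + b). assert (HH : forall y z : R, y = y + z - z) by (intros; ring). apply HH. }
  rewrite E, sum_pair.
  specialize (H1 (S (2 * S j)) ltac:(lia)). specialize (H2 (S j) ltac:(lia)).
  rewrite Rminus_0_r in H1. simpl in H1, H2.
  replace (sum_n (fun j0 : nat => g (2 * j0)%nat + g (S (2 * j0))) (S j) - g (S (2 * S j)) - L)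
    with ((sum_n (fun j0 : nat => g (2 * j0)%nat + g (S (2 * j0))) (S j) - L) + - g (S (2 * S j))) by ring.
  eapply Rle_lt_trans. apply Rabs_triang. rewrite Rabs_Ropp. simpl. lra.
- subst n. replace (2 * j + 1)%nat with (S (2 * j)) by lia. rewrite sum_pair.
  specialize (H2 j ltac:(lia)). simpl in H2. simpl. pose proof (cond_pos eps). lra.
Qed.

Lemma tail0 (v : nat -> R) : ex_series v -> is_lim_seq (fun k => Series (fun n => v (S k + n)%nat)) 0.
Proof. intros Hv.
apply (is_lim_seq_ext (fun k => Series v - sum_n v k)).
{ intros k. rewrite (Series_incr_n v (S k)) by (auto; lia). simpl. rewrite sum_n_Reals. ring. }
replace (Finite 0) with (Finite (Series v - Series v)) by (f_equal; ring).
apply is_lim_seq_minus'. apply is_lim_seq_const. apply (Series_correct v Hv).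
Qed.

Lemma hz_to0 (s : C) a : 1 < Re s -> 0 < a ->
  (forall (F : C -> R), (forall x, Rabs (F (cpow_pos x (Copp s))) <= w (Re s) x) ->
   (forall k, Rabs (F (hurwitz_zeta s (INR (S k) * a))) = Rabs (Series (fun n => F (cpow_pos (INR n + INR (S k) * a) (Copp s))))) ->
   is_lim_seq (fun k => F (hurwitz_zeta s (INR (S k) * a))) 0).
Proof. intros Hs Ha F HF HFz.
set (v := fun m : nat => w (Re s) (INR m + 1)).
assert (Hv : ex_series v) by (apply PS; auto).
set (b := Rmin a 1 / 2). assert (Hb : 0 < b) by (unfold b; assert (0 < Rmin a 1) by (apply Rmin_glb_lt; lra); lra).
assert (Hba : 2 * b <= a) by (unfold b; pose proof (Rmin_l a 1); lra). assert (Hb1 : 2 * b <= 1) by (unfold b; pose proof (Rmin_r a 1); lra).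
set (C := w (Re s) b).
assert (Hterm : forall k n, w (Re s) (INR n + INR (S k) * a) <= C * v (S k + n)%nat).
{ intros k n. unfold v, C. rewrite <- w_mult by (try lra; pose proof (pos_INR (S k + n)); lra).
  apply w_anti. lra. apply Rmult_lt_0_compat; [lra|]. pose proof (pos_INR (S k + n)); lra.
  rewrite plus_INR, S_INR. pose proof (pos_INR n). pose proof (pos_INR k). nra. }
apply is_lim_seq_abs_0.
apply (is_lim_seq_le_le (fun _ => 0) _ (fun k => C * Series (fun n => v (S k + n)%nat))).
- intros k. split. apply Rabs_pos. rewrite HFz.
  assert (Hex : ex_series (fun n => v (S k + n)%nat)).
  { apply (ex_series_incr_n v (S k)). auto. }
  eapply Rle_trans. apply (Series_bnd _ (fun n => C * v (S k + n)%nat)).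
  intros n. eapply Rle_trans. apply HF. apply Hterm. apply ex_scal; auto.
  rewrite Series_scal_l. lra.
- apply is_lim_seq_const.
- replace (Finite 0) with (Rbar_mult C 0) by (simpl; f_equal; ring). apply is_lim_seq_scal_l. apply tail0; auto.
Qed.

Lemma Cmult_minus D x y : Cmult D (Cminus x y) = Cminus (Cmult D x) (Cmult D y).
Proof. apply C_ext; simpl; ring. Qed.

Lemma pair_C (h : nat -> C) L :
  (is_lim_seq (fun k => fst (h (S k))) 0) -> (is_lim_seq (fun k => snd (h (S k))) 0) ->
  is_series (fun j => Cminus (h (S (2 * j))) (h (S (S (2 * j))))) L ->
  is_series (fun k => Cmult (RtoC ((-1) ^ k)) (h (S k))) L.
Proof. intros H1 H2 HL. apply CS in HL. destruct HL as [HL1 HL2]. apply CS. simpl. split.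
- apply pair_R.
  + apply is_lim_seq_abs_0. apply is_lim_seq_abs_0 in H1.
    refine (is_lim_seq_ext _ _ _ _ H1). intros k.
    replace ((-1) ^ k * fst (h (S k)) - 0 * snd (h (S k))) with ((-1) ^ k * fst (h (S k))) by ring.
    rewrite Rabs_mult, pow_1_abs. ring.
  + refine (is_series_ext _ _ _ _ HL1). intros j. rewrite pow_1_even, pow_1_odd. match goal with |- ?x = ?y => change (@eq R x y) end. simpl. ring.
- apply pair_R.
  + apply is_lim_seq_abs_0. apply is_lim_seq_abs_0 in H2.
    refine (is_lim_seq_ext _ _ _ _ H2). intros k.
    replace ((-1) ^ k * snd (h (S k)) + 0 * fst (h (S k))) with ((-1) ^ k * snd (h (S k))) by ring.
    rewrite Rabs_mult, pow_1_abs. ring.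
  + refine (is_series_ext _ _ _ _ HL2). intros j. rewrite pow_1_even, pow_1_odd. match goal with |- ?x = ?y => change (@eq R x y) end. simpl. ring.
Qed.

Lemma part2 (a : R) (ha : 0 < a) (s : C) : 1 < Re s ->
     exists M : C,
       is_series (fun n : nat =>
                    Cminus (hurwitz_zeta s (INR n / (2 * a) + / 2))
                           (hurwitz_zeta s (INR n / (2 * a) + 1))) M /\
       is_series (fun k : nat =>
                    Cmult (RtoC ((-1) ^ k)) (hurwitz_zeta s (INR (S k) * a)))
                 (Cmult (cpow_pos (2 * a) (Copp s)) M).
Proof. intros Hs.
set (P := fun x => cpow_pos x (Copp s)).
set (u := fun j n : nat => Cminus (P (INR n + INR (S (2 * j)) * a)) (P (INR n + INR (S (S (2 * j))) * a))).
set (K := (Rabs (Re s) + Rabs (Im s)) * a).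
set (M := fun j n : nat => K * w (Re s + 1) (INR n + INR (S j) * a)).
destruct (DS (Re s + 1) a ltac:(lra) ha) as [HM HMM].
assert (HM' : forall j, ex_series (M j)). { intros j. apply ex_scal. auto. }
assert (HMM' : ex_series (fun j => Series (M j))).
{ apply (ex_series_ext (fun j => K * Series (fun n => w (Re s + 1) (INR n + INR (S j) * a)))).
  intros j. unfold M. rewrite Series_scal_l. auto. apply ex_scal; auto. }
assert (Hb : forall i j, Rabs (fst (u i j)) <= M i j /\ Rabs (snd (u i j)) <= M i j).
{ intros j n. set (x := INR n + INR (S (2 * j)) * a).
  assert (Hx : 0 < x). { unfold x. pose proof (pos_INR n). pose proof (INR_pos_S (2*j) a ha). lra. }
  assert (Hxa : P (INR n + INR (S (S (2 * j))) * a) = P (x + a)).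
  { unfold P, x. apply cpow_ext. rewrite (S_INR (S (2 * j))). ring. }
  destruct (diff_bnd s x a ltac:(lra) Hx ha) as [B1 B2].
  assert (Hw : w (Re s + 1) x <= w (Re s + 1) (INR n + INR (S j) * a)).
  { apply w_anti. lra. pose proof (pos_INR n). pose proof (INR_pos_S j a ha). lra.
    unfold x. rewrite !S_INR, mult_INR. simpl. pose proof (pos_INR j). nra. }
  assert (HK : 0 <= Rabs (Re s) + Rabs (Im s)) by (pose proof (Rabs_pos (Re s)); pose proof (Rabs_pos (Im s)); lra).
  unfold u, M, K. rewrite Hxa. fold x. split.
  - replace (fst (Cminus (P x) (P (x + a)))) with (-(fst (cpow_pos (x+a) (Copp s)) - fst (cpow_pos x (Copp s)))) by (unfold P, Cminus, Cplus; simpl; ring).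
    rewrite Rabs_Ropp. eapply Rle_trans. apply B1. apply Rle_trans with (((Rabs (Re s) + Rabs (Im s)) * a) * w (Re s + 1) x); [right; ring | apply Rmult_le_compat_l; [nra | exact Hw]].
  - replace (snd (Cminus (P x) (P (x + a)))) with (-(snd (cpow_pos (x+a) (Copp s)) - snd (cpow_pos x (Copp s)))) by (unfold P, Cminus, Cplus; simpl; ring).
    rewrite Rabs_Ropp. eapply Rle_trans. apply B2. apply Rle_trans with (((Rabs (Re s) + Rabs (Im s)) * a) * w (Re s + 1) x); [right; ring | apply Rmult_le_compat_l; [nra | exact Hw]]. }
destruct (CF u M Hb HM' HMM') as [Hrow [Hcol [L [HL1 HL2]]]].
set (D := cpow_pos (2 * a) (Copp s)). set (B := cpow_pos (2 * a) s).
assert (Hcolv : forall n, SC (fun j => u j n) =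
   Cmult D (Cminus (hurwitz_zeta s (INR n / (2 * a) + / 2)) (hurwitz_zeta s (INR n / (2 * a) + 1)))).
{ intros n. apply SC_unique.
  assert (H0 : 0 <= INR n / (2 * a)) by (apply Rdiv_le_0_compat; [apply pos_INR | lra]).
  pose proof (is_series_minus _ _ _ _ (hz_correct s (INR n / (2 * a) + / 2) ltac:(lra) ltac:(lra))
                                     (hz_correct s (INR n / (2 * a) + 1) ltac:(lra) ltac:(lra))) as HH.
  pose proof (is_series_scal D _ _ HH) as H.
  refine (is_series_ext _ _ _ _ H). intros j. unfold u, D, P.
  change (scal ?c ?x) with (Cmult c x). change (plus ?x (opp ?y)) with (Cminus x y).
  assert (0 <= INR j) by apply pos_INR.
  rewrite Cmult_minus, !cpow_mult by lra. f_equal; apply cpow_ext; rewrite !S_INR, mult_INR; simpl; field; lra. }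
assert (Hrowv : forall j, SC (u j) = Cminus (hurwitz_zeta s (INR (S (2 * j)) * a)) (hurwitz_zeta s (INR (S (S (2 * j))) * a))).
{ intros j. apply SC_unique.
  pose proof (is_series_minus _ _ _ _ (hz_correct s _ ltac:(lra) (INR_pos_S (2 * j) a ha))
                                     (hz_correct s _ ltac:(lra) (INR_pos_S (S (2 * j)) a ha))) as HH.
  exact HH. }
exists (Cmult B L). split.
- assert (HH := is_series_scal B _ _ HL2). refine (is_series_ext _ _ _ _ HH).
  intros n. simpl. rewrite Hcolv. change (scal B ?x) with (Cmult B x).
  rewrite Cmult_assoc. unfold B, D. rewrite cpow_inv. apply Cmult_1_l.
- replace (Cmult D (Cmult B L)) with L.
  2:{ rewrite Cmult_assoc, (Cmult_comm D B). unfold D, B. rewrite cpow_inv. symmetry; apply Cmult_1_l. }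
  apply (pair_C (fun k => hurwitz_zeta s (INR k * a))).
  + apply (hz_to0 s a Hs ha fst). intros; apply fst_cpow_bnd. intros; reflexivity.
  + apply (hz_to0 s a Hs ha snd). intros; apply snd_cpow_bnd. intros; reflexivity.
  + refine (is_series_ext _ _ _ _ HL1). intros j. apply Hrowv.
Qed.

Theorem mainTheorem14 (a : R) (ha : 0 < a) :
  (forall s : C, 2 < Re s ->
     exists M : C,
       is_series (fun n : nat => hurwitz_zeta s (INR n / a + 1)) M /\
       is_series (fun k : nat => hurwitz_zeta s (INR (S k) * a))
                 (Cmult (cpow_pos a (Copp s)) M)) /\
  (forall s : C, 1 < Re s ->
     exists M : C,
       is_series (fun n : nat =>
                    Cminus (hurwitz_zeta s (INR n / (2 * a) + / 2))
                           (hurwitz_zeta s (INR n / (2 * a) + 1))) M /\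
       is_series (fun k : nat =>
                    Cmult (RtoC ((-1) ^ k)) (hurwitz_zeta s (INR (S k) * a)))
                 (Cmult (cpow_pos (2 * a) (Copp s)) M)).
Proof. split; intros s Hs. apply part1; auto. apply part2; auto. Qed.
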